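(* Assume Assumption 1 and Assumption 2 with $\delta>1/10$. For any distinct $u,u_1,u_2\in L$, as $n_R\to\infty$, $$\Pr[(u,u_1)\in E,\ (u,u_2)\in E\mid S_L,S_R]=\left(1+\frac{M_{R1}M_{R3}}{M_{R2}^2}\cdot\frac1{w_u}\right)p_{uu_1}p_{uu_2}\,(1+o(1)),$$ where $p_{xy}=\frac{M_{R2}}{M_{R1}^2}\cdot\frac{w_xw_y}{n_R}$.
   Context: Model: left nodes $L$ ($|L|=n_L$), right nodes $R$ ($|R|=n_R$), weight sequences $S_L=(w_u)_{u\in L}$, $S_R=(w_v)_{v\in R}$ of positive reals; $M_{Lk}=\frac1{n_L}\sum_{u\in L}w_u^k$, $M_{Rk}=\frac1{n_R}\sum_{v\in R}w_v^k$. The random bipartite graph $G_b=(L\sqcup R,E_b)$ contains each edge $(u,v)$, $u\in L$, $v\in R$, independently with probability $\min\left(\frac{w_uw_v}{n_RM_{R1}},1\right)$. The projected graph is $G=(L,E)$ with $(u,u')\in E$ for distinct $u,u'\in L$ iff there is $z\in R$ with $(u,z),(u',z)\in E_b$. Assumption 1: $\frac{w_uw_v}{n_RM_{R1}}\le1$ for all $u\in L,v\in R$. Assumption 2 (parameter $\delta>0$), as $n_L,n_R\to\infty$: $\max(S_L\cup S_R)=O(n_R^{1/2-\delta})$, $\min S_L=\Omega(1)$, $M_{R2}=O(M_{R1}^2)$, $M_{R4}=O(n_R^{1-2\delta})$. *)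

(* Defs.v *)
From HB Require Import structures.
From mathcomp Require Import all_boot all_order all_algebra.
From mathcomp Require Import all_classical all_reals all_analysis.
Set Implicit Arguments. Unset Strict Implicit. Unset Printing Implicit Defensive.
Import Order.TTheory GRing.Theory Num.Theory.
Local Open Scope ring_scope.

Section BipartiteModel.
Variable R : realType.

Definition moment (n : nat) (w : 'I_n -> R) (k : nat) : R :=
  (\sum_(i < n) w i ^+ k) / n%:R.

Variables (nL nR : nat) (wL : 'I_nL -> R) (wR : 'I_nR -> R).

Definition p_edge (u : 'I_nL) (v : 'I_nR) : R :=
  Num.min (wL u * wR v / (nR%:R * moment wR 1)) 1.

(* a realisation of the random bipartite graph G_b: its edge indicator *)
Definition bip_graph := {ffun 'I_nL * 'I_nR -> bool}.

Definition bip_weight (g : bip_graph) : R :=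
  \prod_(e : 'I_nL * 'I_nR)
     (if g e then p_edge e.1 e.2 else 1 - p_edge e.1 e.2).

Definition proj_edge (g : bip_graph) (x y : 'I_nL) : bool :=
  (x != y) && [exists z : 'I_nR, g (x, z) && g (y, z)].

Definition two_edge_prob (u u1 u2 : 'I_nL) : R :=
  \sum_(g : bip_graph | proj_edge g u u1 && proj_edge g u u2) bip_weight g.

Definition p_pair (x y : 'I_nL) : R :=
  moment wR 2 / (moment wR 1) ^+ 2 * (wL x * wL y / nR%:R).

Definition two_edge_approx (u u1 u2 : 'I_nL) : R :=
  (1 + moment wR 1 * moment wR 3 / (moment wR 2) ^+ 2 * (1 / wL u))
  * p_pair u u1 * p_pair u u2.

End BipartiteModel.

(* Main.v *)
Require Import Defs.
From HB Require Import structures.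
From mathcomp Require Import all_boot all_order all_algebra.
From mathcomp Require Import all_classical all_reals all_analysis.
From mathcomp Require Import ring lra zify.
Set Implicit Arguments. Unset Strict Implicit. Unset Printing Implicit Defensive.
Import Order.TTheory GRing.Theory Num.Theory.
Import numFieldNormedType.Exports.
Local Open Scope classical_set_scope.
Local Open Scope ring_scope.


Section Comb.
Variables (R : realType) (nL nR : nat) (wL : 'I_nL -> R) (wR : 'I_nR -> R).
Local Notation G := (bip_graph nL nR).
Definition pe (e : 'I_nL * 'I_nR) := p_edge wL wR e.1 e.2.
Definition Ev (F : G -> R) := \sum_(g : G) bip_weight wL wR g * F g.

Lemma Ev_all (s : seq ('I_nL * 'I_nR)) : Ev (fun g => (all g s)%:R) = \prod_(e in s) pe e.
Proof.
rewrite /Ev.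
have H : forall g : G, bip_weight wL wR g * (all g s)%:R = \prod_e ((if g e then pe e else 1 - pe e) * (if e \in s then (g e)%:R else 1)).
  move=> g; rewrite big_split /=; congr (_ * _); rewrite -big_mkcond /=.
  case: (boolP (all g s)) => [/allP Hs|/allPn [x xs gx]].
    by rewrite big1 // => e /Hs ->.
  by rewrite (bigD1 x) //= (negbTE gx) mul0r.
rewrite (eq_bigr _ (fun g _ => H g)).
have E := bigA_distr_bigA (fun e (b : bool) => (if b then pe e else 1 - pe e) * (if e \in s then (b:nat)%:R else 1)).
rewrite /= in E. rewrite -[X in X = _]E.
rewrite [RHS]big_mkcond /=; apply: eq_bigr => e _.
rewrite big_bool /=; case: (e \in s) => /=; rewrite ?mulr1 ?mulr0 ?addr0 //.
by rewrite addrC subrK.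
Qed.

Hypothesis hp : forall e, 0 <= pe e <= 1.

Lemma weight_ge0 (g : G) : 0 <= bip_weight wL wR g.
Proof.
apply: prodr_ge0 => e _; have /andP[h0 h1] := hp e; rewrite /pe in h0 h1.
by case: (g e); rewrite ?subr_ge0.
Qed.

Lemma Ev_le (F H : G -> R) : (forall g, F g <= H g) -> Ev F <= Ev H.
Proof. move=> FH; apply: ler_sum => g _; apply: ler_wpM2l => //; exact: weight_ge0. Qed.

Lemma EvD (F H : G -> R) : Ev (fun g => F g + H g) = Ev F + Ev H.
Proof. by rewrite /Ev -big_split; apply: eq_bigr => g _; rewrite mulrDr. Qed.

Lemma EvN (F : G -> R) : Ev (fun g => - F g) = - Ev F.
Proof. by rewrite /Ev -sumrN; apply: eq_bigr => g _; rewrite mulrN. Qed.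

Lemma EvZ c (F : G -> R) : Ev (fun g => c * F g) = c * Ev F.
Proof. by rewrite /Ev mulr_sumr; apply: eq_bigr => g _; rewrite mulrCA. Qed.

Lemma Ev_sum (I : finType) (F : I -> G -> R) :
  Ev (fun g => \sum_i F i g) = \sum_i Ev (F i).
Proof.
rewrite /Ev; under eq_bigr do rewrite mulr_sumr.
exact: exchange_big.
Qed.

Lemma Ev_ext (F H : G -> R) : (forall g, F g = H g) -> Ev F = Ev H.
Proof. by move=> FH; apply: eq_bigr => g _; rewrite FH. Qed.

Definition mon (g : G) s : R := (all g s)%:R.

Lemma monM g s t : mon g s * mon g t = mon g (s ++ t).
Proof. by rewrite /mon all_cat; case: (all _ s); case: (all _ t); rewrite ?mul1r ?mul0r. Qed.

Lemma Ev_mon s : Ev (fun g => mon g s) = \prod_(e in s) pe e.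
Proof. exact: Ev_all. Qed.

Lemma prod_in_eq (s s' : seq ('I_nL * 'I_nR)) : uniq s' -> s =i s' ->
  \prod_(e in s) pe e = \prod_(e <- s') pe e.
Proof. by move=> us' ss'; rewrite big_uniq //; apply: eq_bigl => x; rewrite ss'. Qed.

Lemma prod_in_le (s s' : seq ('I_nL * 'I_nR)) : uniq s' -> {subset s' <= s} ->
  \prod_(e in s) pe e <= \prod_(e <- s') pe e.
Proof.
move=> us' ss'; rewrite big_uniq // (bigID (mem s')) /=.
have -> : \prod_(i in s | i \in s') pe i = \prod_(i in s') pe i.
  by apply: eq_bigl => x; rewrite andb_idl // => /ss'.
apply: ler_piMr; first by apply: prodr_ge0 => i _; case/andP: (hp i).
by apply: prodr_ile1 => i _; exact: hp.
Qed.


Lemma pe_ge0 e : 0 <= pe e. Proof. by case/andP: (hp e). Qed.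

Lemma mon_id g s : mon g s * mon g s = mon g s.
Proof. by rewrite /mon; case: (all _ s); rewrite ?mul1r ?mul0r. Qed.

Lemma eq_mem_all (s s' : seq ('I_nL * 'I_nR)) :
  all (mem s) s' -> all (mem s') s -> s =i s'.
Proof. by move=> /allP h1 /allP h2 e; apply/idP/idP => [/h2|/h1]. Qed.

Lemma sum_ne_le (I : finType) (f : I -> R) j : (forall i, 0 <= f i) ->
  \sum_(i | i != j) f i <= \sum_i f i.
Proof.
move=> f0; rewrite [X in _ <= X](bigD1 j) //=.
have := f0 j; lra.
Qed.

Lemma sum_sub_le (I : finType) (f : I -> R) (P : pred I) : (forall i, 0 <= f i) ->
  \sum_(i | P i) f i <= \sum_i f i.
Proof.
move=> f0; rewrite big_mkcond; apply: ler_sum => i _; case: (P i) => //.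
Qed.

Variables (u x y : 'I_nL).
Hypotheses (hux : u != x) (huy : u != y) (hxy : x != y).

Definition IA (v : 'I_nL) (g : G) z := mon g [:: (u,z); (v,z)].
Definition NA v g := \sum_z IA v g z.
Definition S2 v := \sum_z pe (u,z) * pe (v,z).
Definition T3 v w := \sum_z pe (u,z) * pe (v,z) * pe (w,z).
Definition Dd v w := \sum_z pe (u,z) ^+ 2 * pe (v,z) * pe (w,z).

Lemma Ev_pair v w z1 z2 : u != v -> u != w -> z1 != z2 ->
  Ev (fun g => IA v g z1 * IA w g z2) = pe (u,z1) * pe (v,z1) * (pe (u,z2) * pe (w,z2)).
Proof.
move=> huv huw hz.
have hvu : v != u by rewrite eq_sym. have hwu : w != u by rewrite eq_sym.
have hz' : z2 != z1 by rewrite eq_sym.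
rewrite (Ev_ext (fun g => monM g _ _)) Ev_mon (@prod_in_eq _ [:: (u,z1); (v,z1); (u,z2); (w,z2)]).
- by rewrite !big_cons big_nil; ring.
- by rewrite /= !inE !xpair_eqE !eqxx ?(negbTE huv, negbTE hvu, negbTE huw, negbTE hwu, negbTE hz, negbTE hz') /= ?andbF ?orbF.
- by [].
Qed.


Lemma Ev_diag v w z : u != v -> u != w -> v != w ->
  Ev (fun g => IA v g z * IA w g z) = pe (u,z) * pe (v,z) * pe (w,z).
Proof.
move=> huv huw hvw.
have hvu : v != u by rewrite eq_sym. have hwu : w != u by rewrite eq_sym.
have hwv : w != v by rewrite eq_sym.
rewrite (Ev_ext (fun g => monM g _ _)) Ev_mon (@prod_in_eq _ [:: (u,z); (v,z); (w,z)]).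
- by rewrite !big_cons big_nil; ring.
- by rewrite /= !inE !xpair_eqE !eqxx ?(negbTE huv, negbTE hvu, negbTE huw, negbTE hwu, negbTE hvw, negbTE hwv) /= ?andbF ?orbF.
- by apply: eq_mem_all; rewrite /= !inE !eqxx ?orbT.
Qed.

Ltac uniq_tac H := rewrite /= !inE !xpair_eqE !eqxx ?H /= ?andbF ?andbT ?orbF.

Lemma Ev_tri1 v w z1 z2 : u != v -> u != w -> v != w -> z1 != z2 ->
  Ev (fun g => IA v g z1 * IA v g z2 * IA w g z1) <=
  pe (u,z1) * pe (v,z1) * pe (w,z1) * (pe (u,z2) * pe (v,z2)).
Proof.
move=> huv huw hvw hz.
have hvu : v != u by rewrite eq_sym. have hwu : w != u by rewrite eq_sym.
have hwv : w != v by rewrite eq_sym. have hz' : z2 != z1 by rewrite eq_sym.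
rewrite (Ev_ext (fun g => etrans (congr1 (fun t => t * _) (monM g _ _)) (monM g _ _))) Ev_mon.
apply: le_trans (@prod_in_le _ [:: (u,z1); (v,z1); (w,z1); (u,z2); (v,z2)] _ _) _.
- by uniq_tac (negbTE huv, negbTE hvu, negbTE huw, negbTE hwu, negbTE hvw, negbTE hwv, negbTE hz, negbTE hz').
- by apply/allP; rewrite /= !inE !eqxx ?orbT.
- by rewrite !big_cons big_nil; rewrite le_eqVlt; apply/orP; left; apply/eqP; ring.
Qed.


Lemma Ev_tri2 v w z1 z2 : u != v -> u != w -> v != w -> z1 != z2 ->
  Ev (fun g => IA v g z1 * IA v g z2 * IA w g z2) <=
  pe (u,z1) * pe (v,z1) * (pe (u,z2) * pe (v,z2) * pe (w,z2)).
Proof.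
move=> huv huw hvw hz.
have hvu : v != u by rewrite eq_sym. have hwu : w != u by rewrite eq_sym.
have hwv : w != v by rewrite eq_sym. have hz' : z2 != z1 by rewrite eq_sym.
rewrite (Ev_ext (fun g => etrans (congr1 (fun t => t * _) (monM g _ _)) (monM g _ _))) Ev_mon.
apply: le_trans (@prod_in_le _ [:: (u,z1); (v,z1); (u,z2); (v,z2); (w,z2)] _ _) _.
- by uniq_tac (negbTE huv, negbTE hvu, negbTE huw, negbTE hwu, negbTE hvw, negbTE hwv, negbTE hz, negbTE hz').
- by apply/allP; rewrite /= !inE !eqxx ?orbT.
- by rewrite !big_cons big_nil le_eqVlt; apply/orP; left; apply/eqP; ring.
Qed.

Lemma Ev_tri3 v w z1 z2 z3 : u != v -> u != w -> z1 != z2 -> z3 != z1 -> z3 != z2 ->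
  Ev (fun g => IA v g z1 * IA v g z2 * IA w g z3) <=
  pe (u,z1) * pe (v,z1) * (pe (u,z2) * pe (v,z2)) * (pe (u,z3) * pe (w,z3)).
Proof.
move=> huv huw hz h31 h32.
have hvu : v != u by rewrite eq_sym. have hwu : w != u by rewrite eq_sym.
have hz' : z2 != z1 by rewrite eq_sym.
have h13 : z1 != z3 by rewrite eq_sym. have h23 : z2 != z3 by rewrite eq_sym.
rewrite (Ev_ext (fun g => etrans (congr1 (fun t => t * _) (monM g _ _)) (monM g _ _))) Ev_mon.
apply: le_trans (@prod_in_le _ [:: (u,z1); (v,z1); (u,z2); (v,z2); (u,z3); (w,z3)] _ _) _.
- by uniq_tac (negbTE huv, negbTE hvu, negbTE huw, negbTE hwu, negbTE hz, negbTE hz', negbTE h31, negbTE h32, negbTE h13, negbTE h23).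
- by apply/allP; rewrite /= !inE !eqxx ?orbT.
- by rewrite !big_cons big_nil le_eqVlt; apply/orP; left; apply/eqP; ring.
Qed.


Lemma Ev_NN : Ev (fun g => NA x g * NA y g) = S2 x * S2 y + T3 x y - Dd x y.
Proof.
rewrite (@Ev_ext _ (fun g => \sum_z1 \sum_z2 IA x g z1 * IA y g z2)); last first.
  by move=> g; rewrite /NA mulr_suml; apply: eq_bigr => z1 _; rewrite mulr_sumr.
rewrite Ev_sum; under eq_bigr do rewrite Ev_sum.
rewrite /S2 /T3 /Dd mulr_suml -big_split -sumrB /=; apply: eq_bigr => z1 _.
rewrite (bigD1 z1) //= Ev_diag //.
rewrite (eq_bigr (fun z2 => pe (u,z1) * pe (x,z1) * (pe (u,z2) * pe (y,z2)))); last first.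
  by move=> z2 hz; apply: Ev_pair => //; rewrite eq_sym.
rewrite [X in _ = _ * X + _ - _](bigD1 z1) //= mulrDr mulr_sumr.
set Sm := \sum_(i | i != z1) _.
ring.
Qed.


Lemma S2_ge0 v : 0 <= S2 v.
Proof. by apply: sumr_ge0 => z _; apply: mulr_ge0; exact: pe_ge0. Qed.

Lemma T3_ge0 v w : 0 <= T3 v w.
Proof. by apply: sumr_ge0 => z _; rewrite !mulr_ge0 ?pe_ge0. Qed.

Lemma partB z1 z2 : z2 != z1 ->
  \sum_z3 Ev (fun g => IA x g z1 * IA x g z2 * IA y g z3) <=
  pe (u,z1) * pe (x,z1) * pe (y,z1) * (pe (u,z2) * pe (x,z2)) +
  pe (u,z1) * pe (x,z1) * (pe (u,z2) * pe (x,z2) * pe (y,z2)) +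
  pe (u,z1) * pe (x,z1) * (pe (u,z2) * pe (x,z2)) * S2 y.
Proof.
move=> h21; have h12 : z1 != z2 by rewrite eq_sym.
rewrite (bigD1 z1) //= (bigD1 z2) //= addrA.
apply: lerD; first by apply: lerD; [exact: Ev_tri1 | exact: Ev_tri2].
have H1 : \sum_(i | (i != z1) && (i != z2))
     Ev (fun g : G => IA x g z1 * IA x g z2 * IA y g i) <= \sum_(i | (i != z1) && (i != z2))
   pe (u,z1) * pe (x,z1) * (pe (u,z2) * pe (x,z2)) * (pe (u,i) * pe (y,i)).
  by apply: ler_sum => i /andP[h1 h2]; apply: Ev_tri3.
refine (le_trans H1 _).
rewrite -mulr_sumr; apply: ler_wpM2l; first by rewrite !mulr_ge0 ?pe_ge0.
by apply: sum_sub_le => i; rewrite mulr_ge0 ?pe_ge0.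
Qed.


Lemma partA z1 :
  \sum_z3 Ev (fun g => IA x g z1 * IA x g z1 * IA y g z3) <=
  pe (u,z1) * pe (x,z1) * pe (y,z1) + pe (u,z1) * pe (x,z1) * S2 y.
Proof.
rewrite (eq_bigr (fun z3 => Ev (fun g => IA x g z1 * IA y g z3))); last first.
  by move=> z3 _; apply: Ev_ext => g; rewrite /IA mon_id.
rewrite (bigD1 z1) //= Ev_diag //; apply: lerD => //.
rewrite (eq_bigr (fun z3 => pe (u,z1) * pe (x,z1) * (pe (u,z3) * pe (y,z3)))); last first.
  by move=> z3 hz; apply: Ev_pair => //; rewrite eq_sym.
rewrite -mulr_sumr; apply: ler_wpM2l; first by rewrite !mulr_ge0 ?pe_ge0.
by apply: sum_sub_le => i; rewrite mulr_ge0 ?pe_ge0.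
Qed.

Lemma Ev_N2N : Ev (fun g => NA x g ^+ 2 * NA y g) <=
  (S2 x * S2 y + T3 x y) * (1 + 2 * S2 x).
Proof.
rewrite (@Ev_ext _ (fun g => \sum_z1 \sum_z2 \sum_z3 IA x g z1 * IA x g z2 * IA y g z3)); last first.
  move=> g; rewrite expr2 /NA mulr_suml mulr_suml; apply: eq_bigr => z1 _.
  rewrite [RHS]exchange_big mulr_sumr; apply: eq_bigr => z3 _; by rewrite mulr_sumr mulr_suml.
rewrite Ev_sum; under eq_bigr => z1 _ do rewrite Ev_sum; under eq_bigr => z1 _ do under eq_bigr => z2 _ do rewrite Ev_sum.
set B := fun z1 => pe (u,z1) * pe (x,z1) * pe (y,z1) * (1 + S2 x) +
   pe (u,z1) * pe (x,z1) * (S2 y + T3 x y + S2 x * S2 y).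
apply: (@le_trans _ _ (\sum_z1 B z1)).
  apply: ler_sum => z1 _; rewrite (bigD1 z1) //=.
  have hB : \sum_(z2 | z2 != z1) \sum_z3 Ev (fun g => IA x g z1 * IA x g z2 * IA y g z3) <=
     pe (u,z1) * pe (x,z1) * pe (y,z1) * S2 x + pe (u,z1) * pe (x,z1) * T3 x y +
     pe (u,z1) * pe (x,z1) * (S2 x * S2 y).
    apply: (@le_trans _ _ (\sum_z2 (pe (u,z1) * pe (x,z1) * pe (y,z1) * (pe (u,z2) * pe (x,z2)) +
      pe (u,z1) * pe (x,z1) * (pe (u,z2) * pe (x,z2) * pe (y,z2)) +
      pe (u,z1) * pe (x,z1) * (pe (u,z2) * pe (x,z2)) * S2 y))).
      have H2 : \sum_(z2 | z2 != z1) \sum_z3 Ev (fun g => IA x g z1 * IA x g z2 * IA y g z3) <=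
        \sum_(z2 | z2 != z1) (pe (u,z1) * pe (x,z1) * pe (y,z1) * (pe (u,z2) * pe (x,z2)) +
        pe (u,z1) * pe (x,z1) * (pe (u,z2) * pe (x,z2) * pe (y,z2)) +
        pe (u,z1) * pe (x,z1) * (pe (u,z2) * pe (x,z2)) * S2 y).
        by apply: ler_sum => z2 hz; apply: partB.
      apply: le_trans H2 _.
      apply: sum_sub_le => i; rewrite !addr_ge0 ?mulr_ge0 ?pe_ge0 ?S2_ge0 //.
    rewrite !big_split /= -!mulr_sumr -mulr_suml -mulr_sumr -/(S2 x) -/(T3 x y).
    rewrite le_eqVlt; apply/orP; left; apply/eqP; ring.
  apply: le_trans (lerD (partA z1) hB) _.
  rewrite /B le_eqVlt; apply/orP; left; apply/eqP; ring.
rewrite /B big_split /= -!mulr_suml.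
have := S2_ge0 x; have := S2_ge0 y; have := T3_ge0 x y.
rewrite /T3 /S2; set sx := \sum_z _. set sy := \sum_z _. set t := \sum_z _.
move=> t0 sy0 sx0.
have : 0 <= sx * sx * sy by rewrite !mulr_ge0.
nra.
Qed.


End Comb.

Lemma ind_le (a b : nat) : ((((0 < a) && (0 < b)) : nat) <= a * b)%N.
Proof. case: a => [|a]; case: b => [|b] //=; lia. Qed.

Lemma ind_ge (a b : nat) :
  (4 * (a * b) <= 2 * (((0 < a) && (0 < b)) : nat) + a * a * b + a * b * b)%N.
Proof. case: a => [|[|[|a]]]; case: b => [|[|[|b]]] //=; nia. Qed.

Section Comb2.
Variables (R : realType) (nL nR : nat) (wL : 'I_nL -> R) (wR : 'I_nR -> R).
Hypothesis hp : forall e, 0 <= pe wL wR e <= 1.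
Variables (u x y : 'I_nL).
Hypotheses (hux : u != x) (huy : u != y) (hxy : x != y).
Local Notation G := (bip_graph nL nR).

Lemma NA_card v (g : G) : NA R u v g = (#|[pred z | g (u,z) && g (v,z)]|)%:R.
Proof.
rewrite /NA /IA /mon /=.
rewrite (eq_bigr (fun z => if g (u,z) && g (v,z) then 1 else 0)); last first.
  by move=> z _; rewrite andbT; case: (_ && _).
by rewrite -big_mkcond sumr_const.
Qed.

Lemma proj_card v (g : G) : u != v ->
  proj_edge g u v = (0 < #|[pred z | g (u,z) && g (v,z)]|)%N.
Proof.
move=> huv; rewrite /proj_edge huv /=.
by apply/idP/idP => [/existsP [z hz] | /card_gt0P [z hz]]; [apply/card_gt0P; exists z | apply/existsP; exists z].
Qed.

Lemma P_Ev : two_edge_prob wL wR u x y =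
  Ev wL wR (fun g => ((proj_edge g u x && proj_edge g u y) : nat)%:R).
Proof.
rewrite /two_edge_prob /Ev big_mkcond; apply: eq_bigr => g _.
by case: ifP => _; rewrite ?mulr1 ?mulr0.
Qed.

Lemma T3C : T3 wL wR u y x = T3 wL wR u x y.
Proof. by apply: eq_bigr => z _; rewrite mulrAC. Qed.

Lemma comb_bounds (m : R) : 0 <= m -> (forall z, pe wL wR (u,z) <= m) ->
  (S2 wL wR u x * S2 wL wR u y + T3 wL wR u x y) * (1 - S2 wL wR u x - S2 wL wR u y - 2 * m)
  <= two_edge_prob wL wR u x y <= S2 wL wR u x * S2 wL wR u y + T3 wL wR u x y.
Proof.
move=> m0 hm.
set X := S2 wL wR u x. set Y := S2 wL wR u y. set T := T3 wL wR u x y.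
have hyx : y != x by rewrite eq_sym.
have Dle : Dd wL wR u x y <= m * T.
  rewrite /T /T3 /Dd mulr_sumr; apply: ler_sum => z _.
  have -> : pe wL wR (u, z) ^+ 2 * pe wL wR (x, z) * pe wL wR (y, z) =
     pe wL wR (u,z) * (pe wL wR (u, z) * pe wL wR (x, z) * pe wL wR (y, z)) by ring.
  by apply: ler_wpM2r; [rewrite !mulr_ge0 ?(pe_ge0 hp) | exact: hm].
have D0 : 0 <= Dd wL wR u x y by apply: sumr_ge0 => z _; rewrite !mulr_ge0 ?(pe_ge0 hp) ?exprn_ge0 ?(pe_ge0 hp).
have X0 : 0 <= X := S2_ge0 hp u x. have Y0 : 0 <= Y := S2_ge0 hp u y.
have T0 : 0 <= T := T3_ge0 hp u x y.
have ENN := Ev_NN wL wR hux huy hxy.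
have E3x := Ev_N2N hp hux huy hxy.
have E3y := Ev_N2N hp huy hux hyx. rewrite T3C in E3y.
rewrite P_Ev; apply/andP; split.
- have H : Ev wL wR (fun g => 4 * (NA R u x g * NA R u y g) - NA R u x g ^+ 2 * NA R u y g
      - NA R u y g ^+ 2 * NA R u x g) <=
      Ev wL wR (fun g => 2 * ((proj_edge g u x && proj_edge g u y) : nat)%:R).
    apply: Ev_le => // g; rewrite !NA_card !proj_card //.
    set a := #|_|. set b := #|_|.
    have := ind_ge a b; rewrite -(ler_nat R) !natrD !natrM.
    move=> h; rewrite -[_ * _ * _]/(_) ; lra.
  rewrite !EvD !EvN !EvZ ENN in H.
  move: H; rewrite -/X -/Y -/T.
  rewrite -/X -/Y -/T in E3x E3y. rewrite (mulrC Y X) in E3y.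
  move: E3x E3y.
  set P := Ev wL wR _. set A := Ev wL wR _. set B := Ev wL wR _.
  move=> E3x E3y H.
  have hmT : m * T <= m * (X * Y + T) by apply: ler_wpM2l => //; rewrite lerDr mulr_ge0.
  have hXY : 0 <= X * Y by rewrite mulr_ge0.
  lra.
- apply: le_trans (_ : Ev wL wR (fun g => NA R u x g * NA R u y g) <= _).
    apply: Ev_le => // g; rewrite !NA_card !proj_card //.
    by rewrite -natrM ler_nat ind_le.
  by rewrite ENN -/X -/Y -/T; lra.
Qed.

End Comb2.

Lemma pow_small (R : realType) (delta eta : R) : 0 < delta -> 0 < eta ->
  exists N : nat, forall n : nat, (N <= n)%N ->
   0 < (n%:R `^ (2^-1 - delta)) ^+ 2 / n%:R < eta.
Proof.
move=> d0 e0.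
set B := (eta^-1 + 1) `^ ((2 * delta)^-1).
have B0 : 0 <= B by apply: powR_ge0.
exists (maxn 1 (Num.Def.archi_bound B)) => n hn.
have hn1 : (1 <= n)%N by apply: leq_trans hn; rewrite leq_maxl.
have hnB : B < n%:R.
  apply: lt_le_trans (archi_boundP B0) _; rewrite ler_nat; apply: leq_trans hn; by rewrite leq_maxr.
have x0 : 0 < n%:R :> R by rewrite ltr0n.
have -> : (n%:R `^ (2^-1 - delta)) ^+ 2 / n%:R = ((n%:R : R) `^ (2 * delta))^-1.
  rewrite -powR_mulrn ?powR_ge0 // -powRrM -{2}(powRr1 (ltW x0)). rewrite -powRB; last by rewrite (gt_eqF x0) implybT.
  rewrite -powRN; congr (powR _ _); rewrite mulrBl mulVf ?pnatr_eq0 //; ring.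
apply/andP; split; first by rewrite invr_gt0 powR_gt0.
have hc : eta^-1 + 1 <= (n%:R : R) `^ (2 * delta).
  have -> : eta^-1 + 1 = B `^ (2 * delta).
    rewrite /B -powRrM mulVf ?powRr1 //; last by rewrite gt_eqF // mulr_gt0.
    by rewrite addr_ge0 // invr_ge0 ltW.
  apply: ge0_ler_powR; rewrite ?nnegrE ?B0 ?(ltW hnB) ?ler0n //.
  by apply: mulr_ge0 => //; apply: ltW.
have ei0 : 0 < eta^-1 by rewrite invr_gt0.
set c := _ `^ _ in hc *.
have c0 : 0 < c by apply: powR_gt0.
have h1 : c^-1 * c = 1 by rewrite mulVf // gt_eqF.
have h2 : eta * eta^-1 = 1 by rewrite mulfV // gt_eqF.
have y0 : 0 < c^-1 by rewrite invr_gt0.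
move: h1 h2 y0 hc ei0; set y := c^-1; set ei := eta^-1 => h1 h2 y0 hc ei0.
nra.
Qed.

Section Inst.
Variables (R : realType) (nL nR : nat) (wL : 'I_nL -> R) (wR : 'I_nR -> R) (u x y : 'I_nL).
Hypotheses (hux : u != x) (huy : u != y) (hxy : x != y) (hn : (0 < nR)%N).
Hypotheses (wLp : forall i, 0 < wL i) (wRp : forall j, 0 < wR j).
Hypothesis A1 : forall i j, wL i * wR j / (nR%:R * moment wR 1) <= 1.

Definition Q k := \sum_(j < nR) wR j ^+ k.

Lemma Q_gt0 k : 0 < Q k.
Proof.
rewrite /Q (bigD1 (Ordinal hn)) //=; apply: ltr_wpDr; last by rewrite exprn_gt0.
by apply: sumr_ge0 => j _; rewrite exprn_ge0 // ltW.
Qed.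

Lemma n_gt0 : 0 < nR%:R :> R. Proof. by rewrite ltr0n. Qed.

Lemma momentE k : moment wR k = Q k / nR%:R. Proof. by []. Qed.

Lemma nM1 : nR%:R * moment wR 1 = Q 1.
Proof. by rewrite momentE mulrC divfK // gt_eqF // n_gt0. Qed.

Lemma peE v z : pe wL wR (v,z) = wL v * wR z / Q 1.
Proof. rewrite /pe /p_edge /= min_l; [by rewrite nM1 | exact: A1]. Qed.

Lemma hpI : forall e, 0 <= pe wL wR e <= 1.
Proof.
case=> v z; rewrite peE; apply/andP; split.
  by rewrite divr_ge0 ?mulr_ge0 ?ltW ?Q_gt0.
by rewrite -nM1 A1.
Qed.

Lemma S2E v : S2 wL wR u v = wL u * wL v * (Q 2 / Q 1 ^+ 2).
Proof.
have q0 := Q_gt0 1.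
rewrite /S2 (eq_bigr (fun z => wL u * wL v / Q 1 ^+ 2 * wR z ^+ 2)); last first.
  by move=> z _; rewrite !peE; field; rewrite gt_eqF.
rewrite -mulr_sumr -/(Q 2); field; by rewrite gt_eqF.
Qed.

Lemma T3E : T3 wL wR u x y = wL u * wL x * wL y * (Q 3 / Q 1 ^+ 3).
Proof.
have q0 := Q_gt0 1.
rewrite /T3 (eq_bigr (fun z => wL u * wL x * wL y / Q 1 ^+ 3 * wR z ^+ 3)); last first.
  by move=> z _; rewrite !peE; field; rewrite gt_eqF.
rewrite -mulr_sumr -/(Q 3); field; by rewrite gt_eqF.
Qed.

Lemma approxE : two_edge_approx wL wR u x y = S2 wL wR u x * S2 wL wR u y + T3 wL wR u x y.
Proof.
rewrite /two_edge_approx /p_pair !momentE !S2E T3E.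
have q1 := Q_gt0 1. have q2 := Q_gt0 2. have n0 := n_gt0. have w0 := wLp u.
field; rewrite ?gt_eqF //.
Qed.

Definition mI := wL u * Num.sqrt (Q 2) / Q 1.

Lemma mI_ge0 : 0 <= mI.
Proof. by rewrite /mI divr_ge0 ?mulr_ge0 ?sqrtr_ge0 ?ltW ?Q_gt0. Qed.

Lemma mI_sq : mI ^+ 2 = wL u ^+ 2 * (Q 2 / Q 1 ^+ 2).
Proof.
rewrite /mI expr_div_n exprMn sqr_sqrtr ?ltW ?Q_gt0 //; by rewrite mulrA.
Qed.

Lemma pe_le_mI z : pe wL wR (u,z) <= mI.
Proof.
rewrite peE /mI ler_pM2r ?invr_gt0 ?Q_gt0 // ler_pM2l //.
have hQ : wR z ^+ 2 <= Q 2.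
  by rewrite /Q (bigD1 z) //= lerDl; apply: sumr_ge0 => j _; apply: exprn_ge0; apply: ltW.
by rewrite -[wR z]gtr0_norm // -sqrtr_sqr ler_sqrt // ltW // Q_gt0.
Qed.

Lemma QratioE : Q 2 / Q 1 ^+ 2 = moment wR 2 / moment wR 1 ^+ 2 / nR%:R.
Proof.
rewrite !momentE. have q1 := Q_gt0 1. have n0 := n_gt0.
field; rewrite ?gt_eqF //.
Qed.

Lemma inst_bounds :
  1 - (wL u * wL x * (Q 2 / Q 1 ^+ 2) + wL u * wL y * (Q 2 / Q 1 ^+ 2) + 2 * mI)
  <= two_edge_prob wL wR u x y / two_edge_approx wL wR u x y <= 1.
Proof.
have := comb_bounds hpI hux huy hxy mI_ge0 pe_le_mI.
rewrite -approxE !S2E.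
have A0 : 0 < two_edge_approx wL wR u x y.
  rewrite approxE.
  have h1 : 0 <= S2 wL wR u x * S2 wL wR u y by rewrite mulr_ge0 ?S2_ge0 //; exact: hpI.
  have h2 : 0 < T3 wL wR u x y.
    rewrite T3E; have q1 := Q_gt0 1; have q3 := Q_gt0 3.
    by rewrite !mulr_gt0 ?invr_gt0 ?exprn_gt0.
  lra.
move/andP=> [h1 h2]; apply/andP; split.
  rewrite ler_pdivlMr //; apply: le_trans h1; rewrite le_eqVlt; apply/orP; left; apply/eqP; ring.
by rewrite ler_pdivrMr // mul1r.
Qed.

End Inst.

Lemma bound_gen (R : realType) (a b rho C s C2 n Kp : R) : 0 < a -> a <= C * s -> 0 < b -> b <= C * s ->
  0 <= rho -> rho <= C2 / n -> 0 < n -> C ^+ 2 * C2 <= Kp -> 0 <= s ^+ 2 / n ->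
  a * b * rho <= Kp * (s ^+ 2 / n).
Proof.
move=> a0 ha b0 hb r0 hr n0 hK t0.
have h1 : a * b <= (C * s) * (C * s) by apply: ler_pM => //; apply: ltW.
have h2 : a * b * rho <= (C * s) * (C * s) * rho by apply: ler_wpM2r.
have h3 : (C * s) * (C * s) * rho <= (C * s) * (C * s) * (C2 / n).
  by apply: ler_wpM2l => //; rewrite -expr2 sqr_ge0.
have h4 : (C * s) * (C * s) * (C2 / n) = C ^+ 2 * C2 * (s ^+ 2 / n) by ring.
have h5 : C ^+ 2 * C2 * (s ^+ 2 / n) <= Kp * (s ^+ 2 / n) by apply: ler_wpM2r.
lra.
Qed.

Theorem mainTheorem7 (R : realType) (delta : R) (hdelta : 1 / 10%:R < delta)
  (nL nR : nat -> nat)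
  (wL : forall k, 'I_(nL k) -> R) (wR : forall k, 'I_(nR k) -> R)
  (u u1 u2 : forall k, 'I_(nL k)) :
  (* n_L, n_R -> infinity along the sequence of instances *)
  (forall N : nat, exists K : nat, forall k : nat, (K <= k)%N -> (N <= nL k)%N) ->
  (forall N : nat, exists K : nat, forall k : nat, (K <= k)%N -> (N <= nR k)%N) ->
  (* positive weights *)
  (forall k i, 0 < wL k i) -> (forall k j, 0 < wR k j) ->
  (* Assumption 1 *)
  (forall k i j, wL k i * wR k j / ((nR k)%:R * moment (wR k) 1) <= 1) ->
  (* Assumption 2 *)
  (exists C : R, exists K : nat, forall k : nat, (K <= k)%N ->
      (forall i, wL k i <= C * (nR k)%:R `^ (2^-1 - delta)) /\
      (forall j, wR k j <= C * (nR k)%:R `^ (2^-1 - delta))) ->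
  (exists c : R, 0 < c /\ exists K : nat, forall k : nat, (K <= k)%N ->
      forall i, c <= wL k i) ->
  (exists C : R, exists K : nat, forall k : nat, (K <= k)%N ->
      moment (wR k) 2 <= C * (moment (wR k) 1) ^+ 2) ->
  (exists C : R, exists K : nat, forall k : nat, (K <= k)%N ->
      moment (wR k) 4 <= C * (nR k)%:R `^ (1 - 2%:R * delta)) ->
  (* u, u1, u2 distinct *)
  (forall k, [/\ u k != u1 k, u k != u2 k & u1 k != u2 k]) ->
  (fun k => two_edge_prob (wL k) (wR k) (u k) (u1 k) (u2 k)
            / two_edge_approx (wL k) (wR k) (u k) (u1 k) (u2 k)) @ \oo --> (1 : R).
Proof.
move=> _ hnR wLp wRp A1 [C [KA HA]] _ [C2 [KM HM]] _ hdist.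
have d0 : 0 < delta by apply: lt_trans hdelta; rewrite divr_gt0 ?ltr0n.
apply/cvgrPdist_lt => e e0.
set Kp := C ^+ 2 * C2 + `|C ^+ 2 * C2| + 1.
have Kp0 : 0 < Kp by rewrite /Kp; have := ler_norm (- (C ^+ 2 * C2)); rewrite normrN; lra.
have hKp : C ^+ 2 * C2 <= Kp by rewrite /Kp; have := normr_ge0 (C ^+ 2 * C2); lra.
set e4 := e / 4%:R.
have e40 : 0 < e4 by rewrite divr_gt0 ?ltr0n.
set eta := Num.min e4 (e4 ^+ 2) / Kp.
have eta0 : 0 < eta by rewrite divr_gt0 // lt_min e40 exprn_gt0.
have hKe1 : Kp * eta <= e4 by rewrite /eta mulrC divfK ?gt_eqF // ge_min lexx.
have hKe2 : Kp * eta <= e4 ^+ 2 by rewrite /eta mulrC divfK ?gt_eqF // ge_min lexx orbT.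
have [N HN] := pow_small d0 eta0.
have [Kn HKn] := hnR (maxn N 1).
exists (maxn KA (maxn KM Kn)) => // k /= hk.
have hkA : (KA <= k)%N by apply: leq_trans hk; rewrite leq_maxl.
have hkM : (KM <= k)%N by apply: leq_trans hk; rewrite (leq_trans _ (leq_maxr _ _)) // leq_maxl.
have hkn : (Kn <= k)%N by apply: leq_trans hk; rewrite (leq_trans _ (leq_maxr _ _)) // leq_maxr.
have hNk := HKn k hkn.
have hn : (0 < nR k)%N by apply: leq_trans hNk; rewrite leq_maxr.
have [ht0 htl] := andP (HN (nR k) (leq_trans (leq_maxl _ _) hNk)).
have [hux huy hxy] := hdist k.
have [hwL _] := HA k hkA.
have hM := HM k hkM.
set s := (nR k)%:R `^ (2^-1 - delta) in hwL ht0 htl.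
set t := s ^+ 2 / (nR k)%:R in ht0 htl.
have := inst_bounds hux huy hxy hn (wLp k) (wRp k) (A1 k).
set r := two_edge_prob _ _ _ _ _ / _.
move/andP=> [hr1 hr2].
rewrite (QratioE hn (wRp k)) in hr1.
have n0 : 0 < (nR k)%:R :> R by rewrite ltr0n.
have M10 : 0 < moment (wR k) 1 by rewrite momentE divr_gt0 // Q_gt0.
have rho0 : 0 <= moment (wR k) 2 / moment (wR k) 1 ^+ 2 / (nR k)%:R.
  have M20 : 0 < moment (wR k) 2 by rewrite momentE divr_gt0 // Q_gt0.
  by apply: divr_ge0; [apply: divr_ge0; [exact: ltW | exact: exprn_ge0 (ltW M10)] | exact: ltW].
have rhoC : moment (wR k) 2 / moment (wR k) 1 ^+ 2 / (nR k)%:R <= C2 / (nR k)%:R.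
  rewrite ler_pM2r ?invr_gt0 // ler_pdivrMr ?exprn_gt0 //.
set rho := _ / _ / _ in rho0 rhoC hr1.
have hX := bound_gen (wLp k (u k)) (hwL (u k)) (wLp k (u1 k)) (hwL (u1 k)) rho0 rhoC n0 hKp (ltW ht0).
have hY := bound_gen (wLp k (u k)) (hwL (u k)) (wLp k (u2 k)) (hwL (u2 k)) rho0 rhoC n0 hKp (ltW ht0).
have hm := bound_gen (wLp k (u k)) (hwL (u k)) (wLp k (u k)) (hwL (u k)) rho0 rhoC n0 hKp (ltW ht0).
have hmsq := mI_sq (wL k) (u k) hn (wRp k).
rewrite (QratioE hn (wRp k)) -/rho in hmsq.
have hm0 := mI_ge0 (u k) hn (wLp k) (wRp k).
move: hr1 hr2 hX hY hm hmsq hm0.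
set X := wL k (u k) * wL k (u1 k) * rho.
set Y := wL k (u k) * wL k (u2 k) * rho.
set m := mI (wL k) (wR k) (u k).
rewrite -expr2 => hr1 hr2 hX hY hm hmsq hm0.
have hKt : Kp * t < Kp * eta by rewrite ltr_pM2l.
rewrite -/t in hX hY hm.
have hXe : X < e4 by lra.
have hYe : Y < e4 by lra.
have hm2 : m ^+ 2 < e4 ^+ 2 by lra.
have hme : m < e4 by nra.
rewrite ger0_norm; last by lra.
rewrite /e4 in hXe hYe hme.
lra.
Qed.
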